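(* In the crossed product setting described in the context, with $\ast$ an involution on $D$ satisfying $K^\ast\subseteq K$, the following are equivalent: (1) $(k^\ast)^\sigma=(k^\sigma)^\ast$ for every $k\in K$ and $\sigma\in G$; (2) $e_\sigma^\ast e_\sigma\in K$ for every $\sigma\in G$; (3) $f(e_\tau^\ast e_\sigma)=0$ for all $\sigma,\tau\in G$ with $\sigma\neq\tau$.
   Context: Let $K/F$ be a finite Galois extension of fields of characteristic $0$ with Galois group $G$; write $k^\sigma$ for the image of $k\in K$ under $\sigma\in G$. Let $\Phi\colon G\times G\to K\setminus\{0\}$ be a normalized $2$-cocycle, and let $D=(K/F,\Phi)$ be the crossed product: the right $K$-vector space with basis $(e_\sigma)_{\sigma\in G}$, $e_{\mathrm{id}}=1$, with multiplication $(\sum_\sigma e_\sigma c_\sigma)(\sum_\tau e_\tau d_\tau)=\sum_{\sigma,\tau}e_{\sigma\tau}\Phi(\sigma,\tau)c_\sigma^\tau d_\tau$ (so $ke_\sigma=e_\sigma k^\sigma$ for $k\in K$). Assume $D$ is a division algebra (it is central simple over $F$ with maximal subfield $K$). An involution is an additive anti-automorphism of order at most $2$. Define $f\colon D\to K$ by $f(\sum_\sigma e_\sigma c_\sigma)=c_{\mathrm{id}}$. *)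

(* Defs.v *)
From HB Require Import structures.
From mathcomp Require Import all_boot all_order all_algebra all_fingroup all_field.
Set Implicit Arguments. Unset Strict Implicit. Unset Printing Implicit Defensive.
Import GRing.Theory.
Local Open Scope ring_scope.

(* Setting: K/F finite Galois is modelled by L : splittingFieldType F with
   galois 1 fullv; K = L, G = gal_of {:L} (all F-automorphisms of L).
   For sigma : G and k : L, "k^sigma" is  sigma k.  MathComp's convention is
   (sigma * tau)%g k = tau (sigma k) (lemma galM), i.e. k^(sigma tau) = (k^sigma)^tau,
   which is the convention forced by associativity of the crossed product. *)

Section CrossedProduct.
Variables (F : fieldType) (L : splittingFieldType F).
Local Notation G := (gal_of (fullv : {vspace L})).

(* An element sum_sigma e_sigma c_sigma of D is represented by its
   coefficient function c : G -> K. *)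
Definition cp := {ffun G -> L}.

Definition cp_e (s : G) : cp := [ffun t => if t == s then 1 else 0].

Definition cp_K (k : L) : cp := [ffun t => if t == 1%g then k else 0].

Definition cp_one : cp := cp_K 1.

Definition cp_mul (Phi : G -> G -> L) (x y : cp) : cp :=
  [ffun r => \sum_(s : G) \sum_(t : G | (s * t)%g == r) Phi s t * t (x s) * y t].

Definition cp_f (x : cp) : L := x 1%g.

(* normalized 2-cocycle (for the right action k^s) with values in K \ {0} *)
Definition normalized_cocycle (Phi : G -> G -> L) : Prop :=
  [/\ forall s t, Phi s t != 0,
      forall s, Phi 1%g s = 1,
      forall s, Phi s 1%g = 1 &
      forall s t r, Phi (s * t)%g r * r (Phi s t) = Phi s (t * r)%g * Phi t r].

Definition cp_division (Phi : G -> G -> L) : Prop :=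
  forall x : cp, x != 0 ->
    exists y : cp, cp_mul Phi x y = cp_one /\ cp_mul Phi y x = cp_one.

Definition cp_involution (Phi : G -> G -> L) (star : cp -> cp) : Prop :=
  [/\ forall x y, star (x + y) = star x + star y,
      forall x y, star (cp_mul Phi x y) = cp_mul Phi (star y) (star x) &
      forall x, star (star x) = x].

Definition stabK (star : cp -> cp) : Prop :=
  forall k : L, exists k' : L, star (cp_K k) = cp_K k'.

(* the restriction of * to K (meaningful under stabK) *)
Definition starK (star : cp -> cp) (k : L) : L := cp_f (star (cp_K k)).

End CrossedProduct.

(* Main.v *)
Require Import Defs.
From HB Require Import structures.
From mathcomp Require Import all_boot all_order all_algebra all_fingroup all_field.
Import GRing.Theory.
Local Open Scope ring_scope.

Section Aux.
Variables (F : fieldType) (L : splittingFieldType F).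
Local Notation G := (gal_of (fullv : {vspace L})).
Variable Phi : G -> G -> L.

Lemma eq_mulV (a b c : G) : ((a * b)%g == c) = (a == (c * b^-1)%g).
Proof.
apply/eqP/eqP => [<-|->]; first by rewrite mulgK.
by rewrite mulgKV.
Qed.

Lemma cp_mul_e (x : cp L) (t : G) (r : G) :
  cp_mul Phi x (cp_e t) r = Phi (r * t^-1)%g t * t (x (r * t^-1)%g).
Proof.
rewrite /cp_mul ffunE.
rewrite (eq_bigr (fun s => if s == (r * t^-1)%g then Phi s t * t (x s) else 0)).
  by rewrite -big_mkcond /= big_pred1_eq.
move=> s _; rewrite big_mkcond (bigD1 t) //= big1 ?addr0.
  rewrite /cp_e ffunE eqxx mulr1 eq_mulV.
  by case: ifP.
move=> u /negbTE Hu; rewrite /cp_e ffunE Hu mulr0; by case: ifP.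
Qed.

Lemma cp_mul_K (x : cp L) (k : L) (r : G) :
  cp_mul Phi x (cp_K k) r = Phi r 1%g * x r * k.
Proof.
have -> : cp_K k = [ffun u => if u == 1%g then k else 0] by [].
rewrite /cp_mul ffunE.
rewrite (eq_bigr (fun s => if s == r then Phi s 1%g * x s * k else 0)).
  by rewrite -big_mkcond /= big_pred1_eq.
move=> s _; rewrite big_mkcond (bigD1 1%g) //= big1 ?addr0.
  rewrite ffunE eqxx mulg1 gal_id; by case: ifP.
move=> u /negbTE Hu; rewrite ffunE Hu mulr0; by case: ifP.
Qed.

Lemma cp_K_mul (y : cp L) (k : L) (r : G) :
  cp_mul Phi (cp_K k) y r = Phi 1%g r * r k * y r.
Proof.
rewrite /cp_mul ffunE (bigD1 1%g) //=.
have -> : \sum_(i | i != 1%g) \sum_(t | (i * t)%g == r) Phi i t * t (cp_K k i) * y t = 0.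
  apply: big1 => s /negbTE Hs; apply: big1 => u _; by rewrite ffunE Hs rmorph0 mulr0 mul0r.
rewrite addr0 (bigD1 r) //=; last by rewrite mul1g.
have -> : \sum_(i | ((1 * i)%g == r) && (i != r)) Phi 1%g i * i (cp_K k 1%g) * y i = 0.
  apply: big1 => u /andP[/eqP H1 H2]; by rewrite mul1g in H1; rewrite H1 eqxx in H2.
by rewrite addr0 ffunE eqxx.
Qed.

End Aux.

Theorem proposition3p2 (F : fieldType) (L : splittingFieldType F)
  (charL0 : [pchar L] =i pred0)
  (galLF : galois 1%VS (fullv : {vspace L}))
  (Phi : gal_of (fullv : {vspace L}) -> gal_of (fullv : {vspace L}) -> L)
  (HPhi : normalized_cocycle Phi)
  (Hdiv : cp_division Phi)
  (star : cp L -> cp L)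
  (Hstar : cp_involution Phi star)
  (HK : stabK star) :
  [<-> (forall (k : L) (s : gal_of (fullv : {vspace L})),
          s (starK star k) = starK star (s k));
       (forall s : gal_of (fullv : {vspace L}),
          exists k : L, cp_mul Phi (star (cp_e s)) (cp_e s) = cp_K k);
       (forall s t : gal_of (fullv : {vspace L}), s != t ->
          cp_f (cp_mul Phi (star (cp_e t)) (cp_e s)) = 0)].
Proof.
case: HPhi => Phi0 Phi1l Phi1r _.
case: Hstar => sD sM sK.
set G := gal_of (fullv : {vspace L}).
have s0 : star 0 = 0.
  by apply: (addrI (star 0)); rewrite addr0 -sD addr0.
have starKE : forall k, star (cp_K k) = cp_K (starK star k).
  by move=> k; case: (HK k) => k' E; rewrite /starK E /cp_f ffunE eqxx.
have alphaK : forall k, starK star (starK star k) = k.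
  move=> k; have := sK (cp_K k); rewrite !starKE => /(congr1 (fun x : cp L => x 1%g)).
  by rewrite !ffunE eqxx.
have xnz : forall s : G, star (cp_e s) != 0.
  move=> s; apply/eqP => H; have := sK (cp_e s); rewrite H s0.
  move/(congr1 (fun x : cp L => x s)); rewrite !ffunE eqxx => /eqP.
  by rewrite eq_sym oner_eq0.
have rel : forall (s t : G) k, star (cp_e s) t != 0 ->
    starK star k = t (starK star (s k)).
  move=> s t k Hx.
  have E : cp_mul Phi (cp_K k) (cp_e s) = cp_mul Phi (cp_e s) (cp_K (s k)).
    apply/ffunP => r; rewrite cp_K_mul cp_mul_K /cp_e ffunE.
    case: eqP => [->|_]; last by rewrite !mulr0 mul0r.
    by rewrite Phi1l Phi1r !mulr1 mul1r.
  have := congr1 star E; rewrite !sM !starKE => /(congr1 (fun x : cp L => x t)).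
  rewrite cp_mul_K cp_K_mul Phi1l Phi1r !mul1r => H.
  by apply: (mulfI Hx); rewrite H mulrC.
have fE : forall (x : cp L) (s : G),
    cp_f (cp_mul Phi x (cp_e s)) = Phi (s^-1)%g s * s (x (s^-1)%g).
  by move=> x s; rewrite /cp_f cp_mul_e mul1g.
tfae.
- move=> P0 s.
  have Hsupp : forall t : G, t != (s^-1)%g -> star (cp_e s) t = 0.
    move=> t Ht; apply/eqP; apply: contraNT Ht => Hx.
    have Hst : (s * t)%g = 1%g.
      apply/eqP/gal_eqP => y _.
      rewrite gal_id galM ?memvf //.
      have := rel s t (starK star y) Hx.
      by rewrite alphaK -P0 alphaK => <-.
    by rewrite -(mulKg s t) Hst mulg1.
  exists (cp_mul Phi (star (cp_e s)) (cp_e s) 1%g).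
  apply/ffunP => r; rewrite [in RHS]ffunE.
  case: eqP => [->//|/eqP Hr].
  rewrite cp_mul_e Hsupp ?rmorph0 ?mulr0 //.
  apply: contra Hr => /eqP H; apply/eqP.
  by rewrite -(mulgKV s r) H mulVg.
- move=> P1 s t Hst; rewrite fE.
  case: (P1 t) => k Hk.
  have := congr1 (fun x : cp L => x ((s^-1) * t)%g) Hk.
  rewrite cp_mul_e mulgK ffunE.
  have -> : ((s^-1 * t)%g == 1%g) = false.
    apply/negbTE; apply: contra Hst => /eqP H.
    by rewrite -(mulKVg s t) H mulg1.
  move/eqP; rewrite mulf_eq0 (negbTE (Phi0 _ _)) /= fmorph_eq0 => /eqP ->.
  by rewrite rmorph0 mulr0.
- move=> P2 k s.
  have Hx : star (cp_e s) (s^-1)%g != 0.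
    apply: contra (xnz s) => /eqP H0; apply/eqP/ffunP => t.
    rewrite ffunE.
    case: (eqVneq t (s^-1)%g) => [->//|Ht].
    have Hu : (t^-1)%g != s.
      apply: contra Ht => /eqP <-; by rewrite invgK.
    have := P2 _ _ Hu; rewrite fE invgK => /eqP.
    by rewrite mulf_eq0 (negbTE (Phi0 _ _)) /= fmorph_eq0 => /eqP.
  rewrite (rel s _ k Hx) -galM ?memvf // mulVg gal_id.
  by [].
Qed.
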